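(* Let $H:\mathbb R_+\to(0,1)$ be continuous and satisfy: (H1) there are constants $0<h_1<h_2<1$ with $h_1\le H_t\le h_2$ for all $t\ge0$; (H2) there are constants $D>0$, $\kappa\in(0,1]$ with $|H_t-H_s|\le D|t-s|^\kappa$ for all $t\ge s>0$. Let $Y$ be the multifractional Brownian motion with Hurst function $H$. Let $z(s)=s^{h_2}(\log^2s+1)^{1/2}$ for $s\ge1$ and $z(s)=1$ for $0\le s<1$, and let $K_2>0$ be a constant such that $\mathbb E(Y(t)-Y(s))^2\le K_2|t-s|^{2H_t}+K_2(H_t-H_s)^2z^2(s)$ for all $t\ge s\ge0$. Put $K_3=K_2^{1/2}(1+D^2)^{1/2}$, $h_3=\min\{h_1,\kappa\}$, $h_4=\max\{h_2,\kappa\}$, $h_5=h_4-h_3$. Let $a,b\in\mathbb R_+$ with $b-a\ge1$. Then: (a) for all $t,s\in[a,b]$ with $|t-s|\le1$, $\left(\mathbb E(Y(t)-Y(s))^2\right)^{1/2}\le K_3|t-s|^{h_3}z(b)$; (b) for all $t,s\in[a,b]$, $\left(\mathbb E(Y(t)-Y(s))^2\right)^{1/2}\le K_3|t-s|^{h_3}(b-a)^{h_5}z(b)$; (c) for all $t_1,t_2,s_1,s_2\in[a,b]$, \[ \left(\mathbb E(Y(t_1)-Y(t_2)-Y(s_1)+Y(s_2))^2\right)^{1/2}\le 2K_3\max(|t_1-s_1|,|t_2-s_2|)^{h_3}(b-a)^{h_5}z(b). \]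
   Context: The (harmonizable) multifractional Brownian motion with continuous functional parameter $H$ is $Y(t)=\int_{\mathbb R}\frac{e^{itu}-1}{|u|^{H_t+1/2}}\widetilde W(du)$, $t\ge0$, where $\widetilde W$ is the Fourier transform of real Gaussian white noise $W$ (the unique complex-valued random measure with $\int f\,dW=\int\widehat f\,d\widetilde W$ a.s. for all $f\in L^2(\mathbb R)$). Such a constant $K_2$ exists. *)

(* Defs.v *)
From HB Require Import structures.
From mathcomp Require Import all_boot all_order all_algebra.
From mathcomp Require Import all_classical all_reals all_analysis.
Set Implicit Arguments. Unset Strict Implicit. Unset Printing Implicit Defensive.
Import Order.TTheory GRing.Theory Num.Theory.
Local Open Scope ring_scope.

(* |(e^{itu}-1)/|u|^{H_t+1/2} - (e^{isu}-1)/|u|^{H_s+1/2}|^2, written out in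
   real and imaginary parts *)
Definition mbm_incr_integrand {R : realType} (H : R -> R) (t s u : R) : R :=
  let c1 := `|u| `^ (- (H t + 2^-1)) in
  let c2 := `|u| `^ (- (H s + 2^-1)) in
  (c1 * (cos (t * u) - 1) - c2 * (cos (s * u) - 1)) ^+ 2
  + (c1 * sin (t * u) - c2 * sin (s * u)) ^+ 2.

(* Y is a (version of the) harmonizable multifractional Brownian motion with
   Hurst function H, at the level of second moments of increments:
   E (Y(t)-Y(s))^2 = cst * \int_R |(e^{itu}-1)/|u|^{H_t+1/2}
                                  - (e^{isu}-1)/|u|^{H_s+1/2}|^2 du,
   where cst > 0 is the normalization constant of the Fourier transform
   of white noise (its value depends on the Fourier convention). *)
Definition is_mbm {R : realType} {d} {T : measurableType d}
  (P : probability T R) (H : R -> R) (Y : R -> T -> R) : Prop :=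
  (forall t, 0 <= t -> measurable_fun setT (Y t)) /\
  exists cst : R, 0 < cst /\
    forall t s, 0 <= t -> 0 <= s ->
      (\int[P]_w ((Y t w - Y s w) ^+ 2)%:E =
       cst%:E * \int[lebesgue_measure]_u (mbm_incr_integrand H t s u)%:E)%E.

Definition mom2 {R : realType} {d} {T : measurableType d}
  (P : probability T R) (X : T -> R) : \bar R :=
  (\int[P]_w ((X w) ^+ 2)%:E)%E.

(* the L^2 norm (E X^2)^{1/2} (meaningful when mom2 P X is finite) *)
Definition l2norm {R : realType} {d} {T : measurableType d}
  (P : probability T R) (X : T -> R) : R :=
  Num.sqrt (fine (mom2 P X)).

Definition zfun {R : realType} (h2 s : R) : R :=
  if 1 <= s then s `^ h2 * Num.sqrt ((ln s) ^+ 2 + 1) else 1.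

(* Main.v *)
Require Import Defs.
From HB Require Import structures.
From mathcomp Require Import all_boot all_order all_algebra.
From mathcomp Require Import all_classical all_reals all_analysis.
From mathcomp Require Import ring lra measurable_realfun.
Import Order.TTheory GRing.Theory Num.Theory.
Import numFieldNormedType.Exports.
Local Open Scope classical_set_scope.
Local Open Scope ring_scope.


Lemma l2_of (R : realType) (d : measure_display) (T : measurableType d)
  (P : probability T R) (X : T -> R) (c : R) : 0 <= c ->
  (mom2 P X <= (c ^+ 2)%:E)%E ->
  (mom2 P X < +oo)%E /\ l2norm P X <= c.
Proof.
move=> c0 hm.
have m0 : (0 <= mom2 P X)%E by apply: integral_ge0 => w _; rewrite lee_fin sqr_ge0.
split; first by apply: le_lt_trans hm _; rewrite ltey.
rewrite /l2norm; move: hm m0; case: (mom2 P X) => [r| |] //=.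
rewrite !lee_fin => hr r0.
by rewrite -(ger0_norm c0) -sqrtr_sqr; apply: ler_wsqrtr.
Qed.

Lemma mom2_sym (R : realType) (d : measure_display) (T : measurableType d)
  (P : probability T R) (Y : R -> T -> R) t s :
  mom2 P (fun w => (Y s w - Y t w)%R) = mom2 P (fun w => (Y t w - Y s w)%R).
Proof. by rewrite /mom2; apply: eq_integral => w _; rewrite -opprB sqrrN. Qed.

Lemma hold0 (R : realType) (H : R -> R) (D kappa : R) :
  {within [set x : R | 0 <= x], continuous H} ->
  0 < D -> 0 < kappa ->
  (forall t s, 0 < s -> s <= t -> `|H t - H s| <= D * (t - s) `^ kappa) ->
  forall t s, 0 <= s -> s <= t -> `|H t - H s| <= D * (t - s) `^ kappa.
Proof.
move=> Hc D0 k0 Hh t s; rewrite le0r => /orP[/eqP->|s0 st]; last exact: Hh.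
rewrite subr0 => t0.
have [->|tpos] := eqVneq t 0.
  by rewrite subrr normr0 powR0 ?mulr0 // gt_eqF.
have {}tpos : 0 < t by rewrite lt_neqAle eq_sym tpos t0.
apply/ler_addgt0Pr => e e0.
have := (proj1 (subspace_continuousP _ _) Hc) 0 (lexx 0).
move=> /cvgr_dist_lt /(_ e e0).
move=> /nbhs_ballP[r r0 Hr].
pose x := Num.min (r / 2) (t / 2).
have x0 : 0 < x by rewrite lt_min divr_gt0 ?divr_gt0.
have xt : x <= t by rewrite ge_min; apply/orP; right; rewrite ler_pdivrMr // ler_peMr // ?ler1n // ltW.
have /Hr hx : ball (0:R) r x.
  rewrite /ball /= sub0r normrN gtr0_norm //.
  by rewrite gt_min; apply/orP; left; rewrite ltr_pdivrMr // ltr_pMr // ltr1n.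
have := hx (ltW x0).
move=> hlt.
have := Hh t x x0 xt.
have : (t - x) `^ kappa <= t `^ kappa.
  apply: ge0_ler_powR; rewrite ?ltW // ?nnegrE ?subr_ge0 //.
  lra.
move=> h1 h2.
rewrite (_ : H t - H 0 = (H t - H x) + (H x - H 0)); last by rewrite addrA subrK.
apply: (le_trans (ler_normD _ _)).
apply: lerD; first by apply: (le_trans h2); rewrite ler_pM2l.
by rewrite distrC ltW.
Qed.
Lemma z_ge1 (R : realType) (h2 s : R) : 0 <= h2 -> 1 <= zfun h2 s.
Proof.
move=> h20; rewrite /zfun; case: ifP => // s1.
rewrite -[X in X <= _]mulr1; apply: ler_pM => //.
  by rewrite -(powRr0 s) ler_powR.
rewrite -[X in X <= _]sqrtr1; by apply: ler_wsqrtr; rewrite lerDr sqr_ge0.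
Qed.

Lemma z_mono (R : realType) (h2 s b : R) : 0 <= h2 -> s <= b ->
  zfun h2 s <= zfun h2 b.
Proof.
move=> h20 sb; have [s1|s1] := leP 1 s; last first.
  by rewrite {1}/zfun ifN ?z_ge1 // -ltNge.
have b1 : 1 <= b by apply: le_trans sb.
rewrite /zfun s1 b1; apply: ler_pM => //; rewrite ?powR_ge0 ?sqrtr_ge0 //.
- by apply: (ge0_ler_powR h20); rewrite ?nnegrE //; lra.
- apply: ler_wsqrtr; rewrite lerD2r; apply: ler_pM => //; rewrite ?ln_ge0 //;
  by rewrite ler_ln // posrE; lra.
Qed.

Lemma pw_small (R : realType) (x p q : R) : 0 <= x <= 1 -> 0 < p -> p <= q ->
  x `^ q <= x `^ p.
Proof.
move=> /andP[x0 x1] p0 pq; have [->|xn0] := eqVneq x 0.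
  by rewrite !powR0 ?gt_eqF //; lra.
by apply: ger_powR => //; rewrite lt_neqAle eq_sym xn0 x0.
Qed.

Lemma pw_sq (R : realType) (x p : R) : x `^ (2 * p) = (x `^ p) ^+ 2.
Proof.
have [x0|x0] := leP 0 x.
  by rewrite mulrC powRrM -[2]/(2%:R) powR_mulrn ?powR_ge0.
by rewrite !lt0_powR1 // expr1n.
Qed.

Lemma key (R : realType) (K2 D kappa Ht dH u zs zb v : R) :
  0 < K2 -> 0 <= D -> 0 <= u -> `|dH| <= D * u `^ kappa ->
  0 <= zs -> zs <= zb -> 1 <= zb -> 0 <= v ->
  u `^ Ht <= v -> u `^ kappa <= v ->
  K2 * u `^ (2 * Ht) + K2 * dH ^+ 2 * zs ^+ 2
  <= (Num.sqrt K2 * Num.sqrt (1 + D ^+ 2) * v * zb) ^+ 2.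
Proof.
move=> K0 D0 u0 hd zs0 zszb zb1 v0 h1 h2.
have sK : Num.sqrt K2 ^+ 2 = K2 by rewrite sqr_sqrtr ?ltW.
have sD : Num.sqrt (1 + D ^+ 2) ^+ 2 = 1 + D ^+ 2 by rewrite sqr_sqrtr // addr_ge0 ?sqr_ge0.
rewrite !exprMn sK sD.
rewrite pw_sq.
have e1 : (u `^ Ht) ^+ 2 <= v ^+ 2 by rewrite ler_pXn2r // nnegrE powR_ge0.
have e2 : dH ^+ 2 <= D ^+ 2 * v ^+ 2.
  rewrite -exprMn -real_normK ?num_real // ler_pXn2r // ?nnegrE ?mulr_ge0 //.
  by apply: le_trans hd _; rewrite ler_wpM2l.
have e3 : zs ^+ 2 <= zb ^+ 2 by rewrite ler_pXn2r // nnegrE; lra.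
have e4 : 1 <= zb ^+ 2 by rewrite -(expr1n R 2) ler_pXn2r // nnegrE; lra.
have hv : 0 <= v ^+ 2 by rewrite sqr_ge0.
have hdd : 0 <= dH ^+ 2 by rewrite sqr_ge0.
have hD : 0 <= D ^+ 2 by rewrite sqr_ge0.
have hz : 0 <= zs ^+ 2 by rewrite sqr_ge0.
set A := (u `^ Ht) ^+ 2 in e1 *; set V := v ^+ 2 in e1 e2 hv *.
set E := dH ^+ 2 in e2 hdd *; set Z := zs ^+ 2 in e3 hz *; set W := zb ^+ 2 in e3 e4 *.
set DD := D ^+ 2 in e2 hD *.
have : A <= V * W by nra.
have : E * Z <= DD * V * W by nra.
nra.
Qed.

Theorem lemma2 (R : realType) (d : measure_display) (T : measurableType d)
  (P : probability T R) (H : R -> R) (Y : R -> T -> R)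
  (h1 h2 D kappa K2 : R) :
  {within [set x : R | 0 <= x], continuous H} ->
  (forall t, 0 <= t -> 0 < H t < 1) ->
  0 < h1 -> h1 < h2 -> h2 < 1 ->
  (forall t, 0 <= t -> h1 <= H t <= h2) ->
  0 < D -> 0 < kappa -> kappa <= 1 ->
  (forall t s, 0 < s -> s <= t -> `|H t - H s| <= D * (t - s) `^ kappa) ->
  is_mbm P H Y ->
  0 < K2 ->
  (forall t s, 0 <= s -> s <= t ->
     (mom2 P (fun w => (Y t w - Y s w)%R) <=
      (K2 * (t - s) `^ (2 * H t)
       + K2 * (H t - H s) ^+ 2 * (zfun h2 s) ^+ 2)%:E)%E) ->
  let K3 := Num.sqrt K2 * Num.sqrt (1 + D ^+ 2) in
  let h3 := Num.min h1 kappa in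
  let h4 := Num.max h2 kappa in
  let h5 := h4 - h3 in
  forall a b : R, 0 <= a -> 0 <= b -> 1 <= b - a ->
  (forall t s, a <= t <= b -> a <= s <= b -> `|t - s| <= 1 ->
     (mom2 P (fun w => (Y t w - Y s w)%R) < +oo)%E /\
     l2norm P (fun w => (Y t w - Y s w)%R)
       <= K3 * `|t - s| `^ h3 * zfun h2 b) /\
  (forall t s, a <= t <= b -> a <= s <= b ->
     (mom2 P (fun w => (Y t w - Y s w)%R) < +oo)%E /\
     l2norm P (fun w => (Y t w - Y s w)%R)
       <= K3 * `|t - s| `^ h3 * (b - a) `^ h5 * zfun h2 b) /\
  (forall t1 t2 s1 s2, a <= t1 <= b -> a <= t2 <= b ->
     a <= s1 <= b -> a <= s2 <= b ->
     (mom2 P (fun w => (Y t1 w - Y t2 w - Y s1 w + Y s2 w)%R) < +oo)%E /\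
     l2norm P (fun w => (Y t1 w - Y t2 w - Y s1 w + Y s2 w)%R)
       <= 2 * K3 * (Num.max `|t1 - s1| `|t2 - s2|) `^ h3
            * (b - a) `^ h5 * zfun h2 b).

Proof.
move=> Hc Hrange h10 h12 h21 Hb D0 k0 k1 Hh Hm K0 HK K3 h3 h4 h5 a b a0 b0 ab.
have HH := @hold0 _ _ _ _ Hc D0 k0 Hh.
have h20 : 0 <= h2 by lra.
have h30 : 0 < h3 by rewrite lt_min h10 k0.
have h3k : h3 <= kappa by rewrite ge_min lexx orbT.
have h31 : h3 <= h1 by rewrite ge_min lexx.
have h4k : kappa <= h4 by rewrite le_max lexx orbT.
have h42 : h2 <= h4 by rewrite le_max lexx.
have h50 : 0 <= h5 by rewrite /h5 subr_ge0; lra.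
have zb1 : 1 <= zfun h2 b by apply: z_ge1.
have K3ge0 : 0 <= K3 by rewrite /K3 mulr_ge0 ?sqrtr_ge0.
have B : forall t s, a <= t <= b -> a <= s <= b -> forall v, 0 <= v ->
    (forall p, h3 <= p <= h4 -> `|t - s| `^ p <= v) ->
    (mom2 P (fun w => (Y t w - Y s w)%R) <= ((K3 * v * zfun h2 b) ^+ 2)%:E)%E.
  move=> t s; wlog st : t s / s <= t.
    move=> W ht hs v v0 hp; have [st|ts] := leP s t; first exact: W.
    rewrite mom2_sym; apply: W => // [|p hp']; first exact: ltW.
    by rewrite distrC; apply: hp.
  move=> /andP[ta tb] /andP[sa sb] v v0 hp.
  have s0 : 0 <= s by lra.
  apply: le_trans (HK t s s0 st) _; rewrite lee_fin.
  have Hts : `|t - s| = t - s by rewrite ger0_norm // subr_ge0.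
  rewrite Hts in hp.
  move: (Hb t (le_trans s0 st)) => /andP[hb1 hb2].
  apply: key => //; first exact: ltW; first by rewrite subr_ge0.
  - exact: HH.
  - by rewrite /zfun; case: ifP => // _; rewrite mulr_ge0 ?powR_ge0 ?sqrtr_ge0.
  - exact: z_mono.
  - apply: hp; lra.
  - apply: hp; lra.
have Pb : forall x, 0 <= x <= b - a -> forall p, h3 <= p <= h4 ->
    x `^ p <= x `^ h3 * (b - a) `^ h5.
  move=> x /andP[x0 xba] p /andP[p3 p4].
  have ba1 : 1 <= (b - a) `^ h5 by rewrite -(powRr0 (b - a)) ler_powR.
  have [x1|x1] := leP x 1.
    have x01 : 0 <= x <= 1 by rewrite x0 x1.
    apply: (le_trans (@pw_small _ x h3 p x01 h30 p3)).
    by rewrite ler_peMr ?powR_ge0.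
  apply: (@le_trans _ _ (x `^ h4)); first exact: (ler_powR (ltW x1) p4).
  have -> : h4 = h3 + h5 by rewrite /h5 addrC subrK.
  rewrite powRD; last by apply/implyP => _; rewrite gt_eqF //; lra.
  rewrite ler_wpM2l ?powR_ge0 //.
  by apply: (ge0_ler_powR h50); rewrite ?nnegrE //; lra.
have dist_ba : forall t s, a <= t <= b -> a <= s <= b -> 0 <= `|t - s| <= b - a.
  move=> t s ht hs; rewrite normr_ge0 /= ler_norml; apply/andP; split; lra.
split.
  move=> t s ht hs ts1.
  apply: l2_of; first by rewrite mulr_ge0 ?mulr_ge0 ?powR_ge0 ?(le_trans _ zb1).
  apply: (B t s ht hs _ (powR_ge0 _ _)).
  by move=> p /andP[p3 p4]; apply: pw_small => //; rewrite normr_ge0 ts1.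
split.
  move=> t s ht hs.
  have hd := dist_ba t s ht hs.
  rewrite -(mulrA K3).
  apply: l2_of; first by rewrite mulr_ge0 ?mulr_ge0 ?powR_ge0 ?(le_trans _ zb1).
  apply: (B t s ht hs); first by rewrite mulr_ge0 ?powR_ge0.
  exact: Pb.
move=> t1 t2 s1 s2 ht1 ht2 hs1 hs2.
set M := Num.max `|t1 - s1| `|t2 - s2|.
set v := M `^ h3 * (b - a) `^ h5.
have v0 : 0 <= v by rewrite mulr_ge0 ?powR_ge0.
set c := K3 * v * zfun h2 b.
have c0 : 0 <= c.
  by rewrite /c !mulr_ge0 ?powR_ge0 //; apply: le_trans zb1.
have hv : forall t s, a <= t <= b -> a <= s <= b ->
    `|t - s| <= M -> forall p, h3 <= p <= h4 -> `|t - s| `^ p <= v.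
  move=> t s ht hs hM p hp.
  apply: le_trans (Pb _ (dist_ba t s ht hs) _ hp) _.
  rewrite ler_wpM2r ?powR_ge0 //.
  by apply: (ge0_ler_powR (ltW h30)); rewrite ?nnegrE ?normr_ge0 // (le_trans _ hM).
have m1 := B t1 s1 ht1 hs1 v v0 (hv _ _ ht1 hs1 (ltac:(by rewrite le_max lexx))).
have m2 := B t2 s2 ht2 hs2 v v0 (hv _ _ ht2 hs2 (ltac:(by rewrite le_max lexx orbT))).
have -> : 2 * K3 * M `^ h3 * (b - a) `^ h5 * zfun h2 b = 2 * c.
  by rewrite /c /v !mulrA.
apply: l2_of; first by rewrite mulr_ge0.
have meas : forall t s, a <= t <= b -> a <= s <= b ->
    measurable_fun [set: T] (fun w : T => (((Y t w - Y s w) ^+ 2 : R)%:E : \bar R)).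
  move=> t s ht hs; apply/measurable_EFinP; apply: measurable_funX.
  case: Hm => Hm _.
  by apply: measurable_funB; apply: Hm; lra.
apply: (@le_trans _ _ (\int[P]_w ((2 * (Y t1 w - Y s1 w) ^+ 2)%:E
                               + (2 * (Y t2 w - Y s2 w) ^+ 2)%:E))%E).
  rewrite /mom2; apply: ge0_le_integral => //.
  - by move=> w _; rewrite lee_fin sqr_ge0.
  - apply/measurable_EFinP; apply: measurable_funX.
    case: Hm => Hm _.
    apply: measurable_funD; last (apply: Hm; lra).
    apply: measurable_funB; last (apply: Hm; lra).
    by apply: measurable_funB; apply: Hm; lra.
  - apply: emeasurable_funD.
      by apply/measurable_EFinP; apply: measurable_funM => //; apply/measurable_EFinP; exact: meas.
    by apply/measurable_EFinP; apply: measurable_funM => //; apply/measurable_EFinP; exact: meas.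
  - move=> w _; rewrite -EFinD lee_fin.
    set x1 := Y t1 w; set x2 := Y t2 w; set y1 := Y s1 w; set y2 := Y s2 w.
    have := sqr_ge0 (x1 - y1 + (x2 - y2)); nra.
rewrite ge0_integralD //; first last.
- by apply/measurable_EFinP; apply: measurable_funM => //; apply/measurable_EFinP; exact: meas.
- by move=> w _; rewrite lee_fin mulr_ge0 ?sqr_ge0.
- by apply/measurable_EFinP; apply: measurable_funM => //; apply/measurable_EFinP; exact: meas.
- by move=> w _; rewrite lee_fin mulr_ge0 ?sqr_ge0.
under eq_integral do rewrite EFinM.
under [X in (_ + X)%E]eq_integral do rewrite EFinM.
rewrite !ge0_integralZl_EFin //; first last.
- exact: meas.
- by move=> w _; rewrite lee_fin sqr_ge0.
- exact: meas.
- by move=> w _; rewrite lee_fin sqr_ge0.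
have -> : ((2 * c) ^+ 2)%:E = (2%:E * (c ^+ 2)%:E + 2%:E * (c ^+ 2)%:E)%E.
  by rewrite -!EFinM -EFinD; congr EFin; ring.
apply: leeD; apply: lee_wpmul2l => //; rewrite lee_fin //.
Qed.
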